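(* Let $f:\{0,\dots,r-1\}^n\to\mathbb{R}$ be an $r$-valued fitness function with a weak preference for $r-1$ at position $i\in\{1,\dots,n\}$. Consider the $r$-cGA optimizing $f$ with parameter $K$. Then for every $T\in\mathbb{N}$, \[\Pr\left[\min_{t\in\{0,\dots,T\}} p^{(t)}_{i,r-1}\leq p^{(0)}_{i,r-1}-\frac{1}{2r}\right]\leq 2\exp\left(-\frac{K^2}{8Tr^2}\right).\]
   Context: Let $n\geq 1$, $r\geq 2$ be integers and $K>0$. The $r$-cGA maximizing $f$ maintains frequencies $p^{(t)}_{i,j}$ ($i\in\{1,\dots,n\}$, $j\in\{0,\dots,r-1\}$), initialized to $p^{(0)}_{i,j}=1/r$. In iteration $t$ it samples $x,y\in\{0,\dots,r-1\}^n$ independently, each position $i$ independently with $\Pr[x_i=j]=p^{(t)}_{i,j}$; if $f(x)<f(y)$ it swaps $x$ and $y$; then it sets $p^{(t+1)}_{i,j}=p^{(t)}_{i,j}+\frac1K(\mathbf{1}[x_i=j]-\mathbf{1}[y_i=j])$ for all $i,j$, with no margins. It is assumed that $1/r$ is an integer multiple of $1/K$. The function $f$ has a weak preference for value $j$ at position $i$ if for all $x\in\{0,\dots,r-1\}^n$, $f(x_1,\dots,x_i,\dots,x_n)\leq f(x_1,\dots,x_{i-1},j,x_{i+1},\dots,x_n)$. *)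

(* Defs.v *)
From mathcomp Require Import all_boot all_order all_algebra.
From mathcomp Require Import reals sequences exp.
Set Implicit Arguments. Unset Strict Implicit. Unset Printing Implicit Defensive.
Import Order.TTheory GRing.Theory Num.Theory.
Local Open Scope ring_scope.

(* Search points: {0,...,r-1}^n, positions 'I_n (0-based), values 'I_r. *)
Definition point (n r : nat) := {ffun 'I_n -> 'I_r}.

Definition freqs (R : realType) (n r : nat) := 'I_n -> 'I_r -> R.

Definition setpos n r (x : point n r) (i : 'I_n) (j : 'I_r) : point n r :=
  [ffun k => if k == i then j else x k].

Definition weak_pref (R : realType) n r (f : point n r -> R) (i : 'I_n) (j : 'I_r) :=
  forall x : point n r, f x <= f (setpos x i j).

Definition sample_prob (R : realType) n r (p : freqs R n r) (x : point n r) : R :=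
  \prod_(k < n) p k (x k).

Definition cga_step (R : realType) n r (f : point n r -> R) (K : R)
    (p : freqs R n r) (xy : point n r * point n r) : freqs R n r :=
  let: (x, y) := if f xy.1 < f xy.2 then (xy.2, xy.1) else xy in
  fun k j => p k j + K^-1 * ((x k == j)%:R - (y k == j)%:R).

Definition init_freqs (R : realType) n r : freqs R n r := fun _ _ => (r%:R)^-1.

(* frequencies p^{(t)} along a run whose first T sample pairs are s *)
Fixpoint cga_traj (R : realType) n r (f : point n r -> R) (K : R) (T : nat)
    (s : {ffun 'I_T -> point n r * point n r}) (t : nat) : freqs R n r :=
  match t with
  | 0 => @init_freqs R n r
  | t'.+1 =>
      match insub t' : option 'I_T with
      | Some k => cga_step f K (@cga_traj R n r f K T s t') (s k)
      | None => @cga_traj R n r f K T s t'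
      end
  end.

Definition run_prob (R : realType) n r (f : point n r -> R) (K : R) (T : nat)
    (s : {ffun 'I_T -> point n r * point n r}) : R :=
  \prod_(k < T) (sample_prob (cga_traj f K s k) (s k).1
                 * sample_prob (cga_traj f K s k) (s k).2).

Definition cga_Pr (R : realType) n r (f : point n r -> R) (K : R) (T : nat)
    (E : pred {ffun 'I_T -> point n r * point n r}) : R :=
  \sum_(s | E s) run_prob f K s.

(* Main.v *)
Require Import Defs.
From mathcomp Require Import all_boot all_order all_algebra.
From mathcomp Require Import reals sequences exp.
From mathcomp Require Import ring lra.
From mathcomp Require classical_sets functions topology normedtype derive realfun interval_inference.
Set Implicit Arguments. Unset Strict Implicit. Unset Printing Implicit Defensive.
Import Order.TTheory GRing.Theory Num.Theory.
Local Open Scope ring_scope.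

Module CoshM.
Import classical_sets functions topology normedtype derive realfun interval_inference.
Import numFieldNormedType.Exports.
Local Open Scope classical_set_scope.

Section Cosh.
Variable R : realType.

Lemma ndecr_deriv (F dF : R -> R) :
  (forall x : R, is_derive x (1:R) F (dF x)) -> (forall x, 0 <= x -> 0 <= dF x) ->
  forall x, 0 <= x -> F 0 <= F x.
Proof.
move=> hd hp x x0.
apply: (@ger0_derive1_ndecry R F 0).
- by move=> y _; case: (hd y).
- move=> y; rewrite in_itv /= andbT => y0.
  by rewrite derive1E derive_val; apply: hp; exact: ltW.
- apply: continuous_subspaceT => y.
  apply/differentiable_continuous/derivable1_diffP; by case: (hd y).
- by [].
- by [].
Qed.

Lemma is_derive_expRN (x : R) : is_derive x (1:R) (fun y => expR (- y)) (- expR (- x)).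
Proof.
have := @is_derive1_comp R expR (fun y => - y) x (expR (-x)) (-1) _ _.
by rewrite mulrN1; apply.
Qed.

Lemma sinh_ge0 (x : R) : 0 <= x -> 0 <= expR x - expR (- x).
Proof.
move=> x0; rewrite subr_ge0 ler_expR; lra.
Qed.

Lemma tanh_le (x : R) : 0 <= x ->
  0 <= x * (expR x + expR (- x)) - (expR x - expR (- x)).
Proof.
move=> x0.
have := @ndecr_deriv (fun y => y * (expR y + expR (- y)) - (expR y - expR (- y)))
  (fun y => y * (expR y - expR (- y))) _ _ x x0.
  rewrite /= mul0r oppr0 expR0 subrr subr0; apply.
- move=> y; apply: trigger_derive.
  rewrite /GRing.scale /=; ring.
- by move=> y y0; apply: mulr_ge0 => //; apply: sinh_ge0.
Qed.

Lemma cosh_le (x : R) : 0 <= x -> expR x + expR (- x) <= 2 * expR (x ^+ 2 / 2).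
Proof.
move=> x0.
pose F := (fun y : R => - ((expR y + expR (- y)) * expR (- (y ^+ 2 / 2)))).
pose dF := (fun y : R => (y * (expR y + expR (- y)) - (expR y - expR (- y))) * expR (- (y ^+ 2 / 2))).
have hd : forall y : R, is_derive y (1:R) F (dF y).
  move=> y; rewrite /F /dF; apply: trigger_derive.
  rewrite /GRing.scale /=. by field.
have hp : forall y : R, 0 <= y -> 0 <= dF y.
  by move=> y y0; apply: mulr_ge0; [exact: tanh_le | exact: expR_ge0].
have := ndecr_deriv hd hp x0.
rewrite /F /= expr0n /= mul0r oppr0 expR0 mulr1 => h.
have e : expR (- (x ^+ 2 / 2)) * expR (x ^+ 2 / 2) = 1.
  by rewrite -expRD addNr expR0.
have hq := expR_gt0 (x ^+ 2 / 2).
have hr := expR_gt0 (- (x ^+ 2 / 2)).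
set A := expR x + expR (- x) in h *.
set B := expR (x ^+ 2 / 2) in e hq *.
set C := expR (- (x ^+ 2 / 2)) in e h hr.
have : A * C <= 2 by lra.
move=> hAC.
have : A * C * B <= 2 * B by apply: ler_wpM2r => //; exact: ltW.
by rewrite -mulrA e mulr1.
Qed.

End Cosh.

End CoshM.

Section Runs.
Variables (R : realType) (n r : nat) (K : R) (f : point n r -> R).

Local Notation A := (point n r * point n r)%type.

Definition ext T (s : {ffun 'I_T -> A}) (z : A) : {ffun 'I_T.+1 -> A} :=
  [ffun k : 'I_T.+1 => if unlift ord_max k is Some k' then s k' else z].
Definition restr T (s : {ffun 'I_T.+1 -> A}) : {ffun 'I_T -> A} :=
  [ffun k : 'I_T => s (lift ord_max k)].

Lemma restr_ext T s z : restr (@ext T s z) = s.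
Proof. by apply/ffunP => k; rewrite !ffunE liftK. Qed.

Lemma ext_max T s z : (@ext T s z) ord_max = z.
Proof. by rewrite ffunE unlift_none. Qed.

Lemma ext_restr T (s : {ffun 'I_T.+1 -> A}) : ext (restr s) (s ord_max) = s.
Proof.
apply/ffunP => k; rewrite ffunE; case: unliftP => [j ->|->] //.
by rewrite ffunE.
Qed.

Lemma sum_split T (G : {ffun 'I_T.+1 -> A} -> R) :
  \sum_(s : {ffun 'I_T.+1 -> A}) G s =
  \sum_(s : {ffun 'I_T -> A}) \sum_(z : A) G (ext s z).
Proof.
rewrite pair_bigA /=.
rewrite (reindex (fun p : {ffun 'I_T -> A} * A => ext p.1 p.2)) //=.
exists (fun s => (restr s, s ord_max)) => [[s z] _ | s _] /=.
  by rewrite restr_ext ext_max.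
by rewrite ext_restr.
Qed.

Lemma ext_lift T s z (k : 'I_T) : (@ext T s z) (lift ord_max k) = s k.
Proof. by rewrite ffunE liftK. Qed.

Lemma traj_ext T s z t : (t <= T)%N ->
  cga_traj f K (@ext T s z) t = cga_traj f K s t.
Proof.
elim: t => [|t IH] ht //=.
rewrite IH ?(ltnW ht) //.
case: insubP => [k1 _ vk1|]; last by rewrite ltnS (ltnW ht).
case: insubP => [k2 _ vk2|]; last by rewrite ht.
have -> : k1 = lift ord_max k2 by apply: val_inj; rewrite /= /bump leqNgt ltn_ord /= add0n vk1 vk2.
by rewrite ext_lift.
Qed.

Lemma traj_ext_last T s z :
  cga_traj f K (@ext T s z) T.+1 = cga_step f K (cga_traj f K s T) z.
Proof.
rewrite /= traj_ext //.
case: insubP => [k1 _ vk1|]; last by rewrite ltnSn.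
have -> : k1 = ord_max by apply: val_inj.
by rewrite ext_max.
Qed.

Definition W (q : freqs R n r) (z : A) := sample_prob q z.1 * sample_prob q z.2.

Lemma run_prob_ext T s z :
  run_prob f K (@ext T s z) = run_prob f K s * W (cga_traj f K s T) z.
Proof.
rewrite /run_prob big_ord_recr /= traj_ext // ext_max; congr (_ * _).
apply: eq_bigr => k _.
have -> : widen_ord (leqnSn T) k = lift ord_max k.
  by apply: val_inj; rewrite /= /bump leqNgt ltn_ord.
by rewrite ext_lift traj_ext // ltnW.
Qed.

End Runs.

Section Valid.
Variables (R : realType) (n r : nat) (K : R) (f : point n r -> R).
Hypothesis K0 : 0 < K.

Local Notation A := (point n r * point n r)%type.

Definition valid (q : freqs R n r) :=
  (forall k j, exists N : nat, q k j = N%:R / K) /\ (forall k, \sum_j q k j = 1).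

Lemma valid_ge0 q : valid q -> forall k j, 0 <= q k j.
Proof.
by move=> [h _] k j; have [N ->] := h k j; apply: divr_ge0 => //; exact: ltW.
Qed.

Lemma sp_ge0 (q : freqs R n r) x : (forall k j, 0 <= q k j) -> 0 <= sample_prob q x.
Proof. by move=> h; apply: prodr_ge0 => k _. Qed.

Lemma W_ge0 (q : freqs R n r) z : (forall k j, 0 <= q k j) -> 0 <= W q z.
Proof. by move=> h; apply: mulr_ge0; apply: sp_ge0. Qed.

Lemma sum_sp (q : freqs R n r) : (forall k, \sum_j q k j = 1) ->
  \sum_(x : point n r) sample_prob q x = 1.
Proof.
move=> h; rewrite /sample_prob -(bigA_distr_bigA (fun k j => q k j)) /=.
by rewrite big1 // => k _; rewrite h.
Qed.

Lemma sum_W (q : freqs R n r) : (forall k, \sum_j q k j = 1) ->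
  \sum_(z : A) W q z = 1.
Proof.
move=> h; rewrite /W -(pair_bigA _ (fun x y => sample_prob q x * sample_prob q y)) /=.
under eq_bigr do rewrite -mulr_sumr sum_sp // mulr1.
exact: sum_sp.
Qed.

Definition sw (z : A) : A := if f z.1 < f z.2 then (z.2, z.1) else z.

Lemma stepE q z k j : cga_step f K q z k j =
  q k j + K^-1 * (((sw z).1 k == j)%:R - ((sw z).2 k == j)%:R).
Proof. by rewrite /cga_step /sw; case: ifP => _; case: z. Qed.

Lemma sum_ind (x : point n r) k : \sum_(j < r) ((x k == j)%:R : R) = 1.
Proof.
rewrite (bigD1 (x k)) //= eqxx big1 ?addr0 // => j /negbTE nj.
by rewrite eq_sym nj.
Qed.

Lemma valid_step q z : valid q -> W q z != 0 -> valid (cga_step f K q z).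
Proof.
move=> [hN hS] hW.
have nz : forall x, x = z.1 \/ x = z.2 -> forall k, q k (x k) != 0.
  move=> x hx k; move: hW; rewrite /W mulf_eq0 negb_or => /andP[h1 h2].
  case: hx => ->.
    by move: h1; rewrite /sample_prob prodf_seq_neq0 => /allP/(_ k); apply; rewrite mem_index_enum.
  by move: h2; rewrite /sample_prob prodf_seq_neq0 => /allP/(_ k); apply; rewrite mem_index_enum.
have hsw : (forall k, q k ((sw z).1 k) != 0) /\ (forall k, q k ((sw z).2 k) != 0).
  by rewrite /sw; case: ifP => _ /=; split; apply: nz; auto.
case: hsw => h1 h2.
split => [k j|k].
  have [N hNq] := hN k j.
  rewrite stepE hNq.
  case: eqP => e1; case: eqP => e2.
  - by exists N; rewrite subrr mulr0 addr0.
  - by exists N.+1; rewrite subr0 mulr1 -natr1 mulrDl div1r.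
  - have : q k j != 0 by rewrite -e2; apply: h2.
    rewrite hNq; case: N hNq => [|N] hNq; first by rewrite mul0r eqxx.
    move=> _; exists N; rewrite sub0r mulrN1 -natr1 mulrDl div1r; ring.
  - by exists N; rewrite subrr mulr0 addr0.
under eq_bigr do rewrite stepE.
by rewrite big_split /= hS -mulr_sumr sumrB !sum_ind subrr mulr0 addr0.
Qed.

End Valid.

Section Coupling.
Variables (R : realType) (n r : nat) (f : point n r -> R) (i : 'I_n) (jtop : 'I_r).
Hypothesis wp : weak_pref f i jtop.

Local Notation A := (point n r * point n r)%type.

Lemma setpos_at (x : point n r) j : setpos x i j i = j.
Proof. by rewrite ffunE eqxx. Qed.
Lemma setpos_ne (x : point n r) j k : k != i -> setpos x i j k = x k.
Proof. by rewrite ffunE => /negbTE ->. Qed.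
Lemma setpos_same (x : point n r) : setpos x i (x i) = x.
Proof. by apply/ffunP => k; rewrite ffunE; case: eqP => // ->. Qed.
Lemma setpos_setpos (x : point n r) j j' : setpos (setpos x i j) i j' = setpos x i j'.
Proof. by apply/ffunP => k; rewrite !ffunE; case: eqP. Qed.

Definition phi (z : A) : A := (setpos z.1 i (z.2 i), setpos z.2 i (z.1 i)).

Lemma phiK : involutive phi.
Proof.
by move=> [x y]; rewrite /phi /= !setpos_at !setpos_setpos !setpos_same.
Qed.

Lemma sp_split (q : freqs R n r) x :
  sample_prob q x = q i (x i) * \prod_(k | k != i) q k (x k).
Proof. by rewrite /sample_prob (bigD1 i). Qed.

Lemma sp_setpos (q : freqs R n r) x j :
  sample_prob q (setpos x i j) = q i j * \prod_(k | k != i) q k (x k).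
Proof.
rewrite sp_split setpos_at; congr (_ * _); apply: eq_bigr => k hk.
by rewrite setpos_ne.
Qed.

Lemma W_phi (q : freqs R n r) z : W q (phi z) = W q z.
Proof.
case: z => x y; rewrite /W /phi /= !sp_setpos (sp_split q x) (sp_split q y).
ring.
Qed.

Definition g (z : A) : R :=
  (((sw f z).1 i == jtop)%:R - ((sw f z).2 i == jtop)%:R).

Lemma g_phi z : 0 <= g z + g (phi z).
Proof.
case: z => x y; rewrite /g /phi /sw /=.
have hx2 : forall x : point n r, x i = jtop -> forall v, f (setpos x i v) <= f x.
  move=> x0 e v; have := wp (setpos x0 i v); rewrite setpos_setpos -e setpos_same //.
have hy2 : forall y : point n r, forall v, v = jtop -> f y <= f (setpos y i v).
  by move=> y0 v ->; apply: wp.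
case: (eqVneq (x i) jtop) => ex; case: (eqVneq (y i) jtop) => ey.
- by case: ifP => _; case: ifP => _ /=; rewrite ?setpos_at ex ey eqxx subrr addr0.
- have h1 := hx2 x ex (y i); have h2 := hy2 y (x i) ex.
  move: ey => /negbTE ey.
  case: ifP => c1; case: ifP => c2 /=; rewrite ?setpos_at ex ey ?eqxx /=;
    lra.
- have h1 := hy2 x (y i) ey; have h2 := hx2 y ey (x i).
  move: ex => /negbTE ex.
  case: ifP => c1; case: ifP => c2 /=; rewrite ?setpos_at ex ey ?eqxx /=;
    lra.
- move: ex ey => /negbTE ex /negbTE ey.
  by case: ifP => _; case: ifP => _ /=; rewrite ?setpos_at ex ey subrr addr0.
Qed.

Lemma sum_Wg (q : freqs R n r) : (forall k j, 0 <= q k j) ->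
  0 <= \sum_(z : A) W q z * g z.
Proof.
move=> hq.
have e : \sum_(z : A) W q z * g z = \sum_(z : A) W q z * g (phi z).
  rewrite (reindex_inj (inv_inj phiK)) /=.
  by apply: eq_bigr => z _; rewrite W_phi.
have : 0 <= \sum_(z : A) W q z * (g z + g (phi z)).
  by apply: sumr_ge0 => z0 _; apply: mulr_ge0; [exact: W_ge0 | exact: g_phi].
under eq_bigr do rewrite mulrDr.
rewrite big_split /= -e; lra.
Qed.

End Coupling.

Section Hoeff.
Variables (R : realType) (n r : nat) (K : R) (f : point n r -> R) (i : 'I_n) (jtop : 'I_r).
Hypothesis wp : weak_pref f i jtop.
Hypothesis K0 : 0 < K.

Local Notation A := (point n r * point n r)%type.

Lemma exp_tri (x : R) (b1 b2 : bool) :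
  expR (- (x * (b1%:R - b2%:R))) =
  1 + (b1%:R - b2%:R) * ((expR (- x) - expR x) / 2)
    + (b1%:R - b2%:R) ^+ 2 * ((expR x + expR (- x)) / 2 - 1).
Proof.
case: b1; case: b2 => /=;
  rewrite ?subr0 ?sub0r ?addr0 ?mulr1 ?mulrN1 ?opprK ?subrr ?mulr0 ?oppr0 ?expR0; field; rewrite ?pnatr_eq0 //.
Qed.

Lemma hoeff_step (q : freqs R n r) (lam p0 : R) : 0 <= lam ->
  (forall k j, 0 <= q k j) -> (forall k, \sum_j q k j = 1) ->
  \sum_(z : A) W q z * expR (lam * (p0 - cga_step f K q z i jtop))
  <= expR ((lam * K^-1) ^+ 2 / 2) * expR (lam * (p0 - q i jtop)).
Proof.
move=> lam0 hq hs.
set x := lam * K^-1.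
have x0 : 0 <= x by apply: mulr_ge0 => //; rewrite invr_ge0 ltW.
have e : forall z, expR (lam * (p0 - cga_step f K q z i jtop)) =
    expR (lam * (p0 - q i jtop)) * expR (- (x * g f i jtop z)).
  move=> z; rewrite -expRD stepE /g /x; congr expR; ring.
under eq_bigr do rewrite e mulrCA.
rewrite -mulr_sumr mulrC ler_wpM2r ?expR_ge0 //.
set al := (expR (- x) - expR x) / 2.
set be := (expR x + expR (- x)) / 2 - 1.
have al0 : al <= 0.
  rewrite /al; have : expR (- x) <= expR x by rewrite ler_expR; lra.
  lra.
have be0 : 0 <= be.
  rewrite /be; have := expR_ge1Dx x; have := expR_ge1Dx (- x); lra.
have h3 : be <= expR (x ^+ 2 / 2) - 1.
  have := CoshM.cosh_le x0; rewrite /be; lra.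
have eg : forall z, expR (- (x * g f i jtop z)) =
   1 + g f i jtop z * al + g f i jtop z ^+ 2 * be by move=> z; rewrite /g exp_tri.
clearbody al be.
under eq_bigr do rewrite eg !mulrDr mulr1.
rewrite !big_split /= sum_W //.
have h1 : \sum_(z : A) W q z * (g f i jtop z * al) <= 0.
  under eq_bigr do rewrite mulrA.
  rewrite -mulr_suml; apply: mulr_ge0_le0 => //; exact: sum_Wg.
have h2 : \sum_(z : A) W q z * (g f i jtop z ^+ 2 * be) <= be.
  under eq_bigr do rewrite mulrA.
  rewrite -mulr_suml; rewrite -[leRHS]mul1r; apply: ler_wpM2r => //.
  rewrite -(sum_W hs); apply: ler_sum => z _.
  rewrite -[leRHS]mulr1; apply: ler_wpM2l; first exact: W_ge0.
  rewrite /g; case: (_ == _); case: (_ == _) => /=; rewrite ?subrr; lra.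
lra.
Qed.

End Hoeff.

Section Main.
Variables (R : realType) (n r : nat) (K : R) (f : point n r -> R) (i : 'I_n) (jtop : 'I_r).
Hypothesis wp : weak_pref f i jtop.
Hypothesis K0 : 0 < K.
Hypothesis r2 : (2 <= r)%N.
Hypothesis hm : exists m : nat, K = m%:R * r%:R.

Local Notation A := (point n r * point n r)%type.

Lemma valid_init : valid K (@init_freqs R n r).
Proof.
have r0 : r%:R != 0 :> R by rewrite pnatr_eq0 -lt0n (leq_trans _ r2).
case: hm => m em.
have m0 : m%:R != 0 :> R by apply/eqP => h; move: K0; rewrite em h mul0r ltxx.
split => [k j|k].
  exists m; rewrite /init_freqs em; field; apply/andP; split => //.
rewrite /init_freqs sumr_const card_ord -[_ *+ _]mulr_natr mulVf //.
Qed.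

Lemma run_facts T (s : {ffun 'I_T -> A}) :
  0 <= run_prob f K s /\ (run_prob f K s != 0 -> valid K (cga_traj f K s T)).
Proof.
elim: T s => [|T IH] s.
  by rewrite /run_prob big_ord0; split => // _; exact: valid_init.
rewrite -(ext_restr s) run_prob_ext traj_ext_last.
have [h1 h2] := IH (restr s).
case: (eqVneq (run_prob f K (restr s)) 0) => [e|ne].
  by rewrite e mul0r eqxx; split.
have hv := h2 ne.
split.
  by apply: mulr_ge0 => //; apply: W_ge0; exact: (valid_ge0 K0 hv).
rewrite mulf_eq0 negb_or => /andP[n1 n2].
by apply: valid_step.
Qed.



Definition thr := @init_freqs R n r i jtop - (2 * r%:R)^-1.

Definition hit T (s : {ffun 'I_T -> A}) t :=
  [exists t' : 'I_t.+1, cga_traj f K s t' i jtop <= thr].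

Lemma exists_recr t (P : nat -> bool) :
  [exists t' : 'I_t.+2, P t'] = [exists t' : 'I_t.+1, P t'] || P t.+1.
Proof.
apply/existsP/orP => [[t' ht']|[/existsP[t' ht']|ht]].
- case: (ltnP t' t.+1) => c.
    by left; apply/existsP; exists (Ordinal c).
  by right; have -> : t.+1 = t' by apply/eqP; rewrite eqn_leq c -ltnS ltn_ord.
- by exists (widen_ord (leqnSn _) t').
- by exists ord_max.
Qed.

Lemma hit_ext T s z t : (t <= T)%N -> hit (ext s z : {ffun 'I_T.+1 -> A}) t = hit s t.
Proof.
move=> ht; apply: eq_existsb => t'; rewrite traj_ext //.
have := ltn_ord t'; rewrite ltnS => h; exact: leq_trans h ht.
Qed.

Lemma hit_ext_last T s z :
  hit (ext s z : {ffun 'I_T.+1 -> A}) T.+1 =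
  hit s T || (cga_step f K (cga_traj f K s T) z i jtop <= thr).
Proof.
rewrite /hit (exists_recr T (fun t => cga_traj f K (ext s z) t i jtop <= thr)).
by rewrite -/(hit _ T) hit_ext // traj_ext_last.
Qed.

Variables (lam : R) (T0 : nat).
Hypothesis lam0 : 0 <= lam.

Definition Phi (q : freqs R n r) := expR (lam * (@init_freqs R n r i jtop - q i jtop)).
Definition C := expR ((lam * K^-1) ^+ 2 / 2).
Definition Bd := expR (lam * (2 * r%:R)^-1) / C ^+ T0.

Definition V T (s : {ffun 'I_T -> A}) :=
  if hit s T then Bd else Phi (cga_traj f K s T) / C ^+ T.

Lemma C_ge1 : 1 <= C.
Proof. by rewrite /C -[X in X <= _]expR0 ler_expR divr_ge0 // sqr_ge0. Qed.

Lemma C_gt0 : 0 < C.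
Proof. exact: expR_gt0. Qed.

Lemma main_ind T : (T <= T0)%N ->
  \sum_(s : {ffun 'I_T -> A}) run_prob f K s * V s <= 1.
Proof.
elim: T => [|T IH] hT.
  have e : forall s : {ffun 'I_0 -> A}, run_prob f K s * V s = 1.
    move=> s; rewrite /run_prob big_ord0 mul1r /V.
    have -> : hit s 0 = false.
      apply/existsP => -[t']; have -> : t' = ord0 by apply: val_inj; case: t' => [[]].
      rewrite /= /thr; have : 0 < (2 * r%:R : R)^-1.
        by rewrite invr_gt0 mulr_gt0 // ltr0n (leq_trans _ r2).
      lra.
    by rewrite /Phi /= subrr mulr0 expR0 expr0 divr1.
  by under eq_bigr do rewrite e; rewrite sumr_const card_ffun card_ord expn0.
rewrite sum_split.
apply: le_trans (IH (ltnW hT)).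
apply: ler_sum => s _.
under eq_bigr do rewrite run_prob_ext -mulrA.
rewrite -mulr_sumr.
have [h1 h2] := run_facts s.
case: (eqVneq (run_prob f K s) 0) => [->|ne]; first by rewrite !mul0r.
apply: ler_wpM2l => //.
have [hN hS] := h2 ne.
have hq := valid_ge0 K0 (h2 ne).
set q := cga_traj f K s T.
rewrite /V.
under eq_bigr do rewrite hit_ext_last traj_ext_last.
case: (hit s T) => /=.
  by rewrite -mulr_suml sum_W // mul1r.
apply: (@le_trans _ _ (\sum_(z : A) W q z * (Phi (cga_step f K q z) / C ^+ T.+1))).
  apply: ler_sum => z _; apply: ler_wpM2l; first exact: W_ge0.
  case: ifP => // hle.
  rewrite /Bd /Phi; apply: ler_pM.
  - exact: expR_ge0.
  - by rewrite invr_ge0 exprn_ge0 // ltW // C_gt0.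
  - rewrite ler_expR; apply: ler_wpM2l => //; move: hle; rewrite /thr; lra.
  - rewrite lef_pV2 ?posrE ?exprn_gt0 ?C_gt0 //.
    by apply: ler_weXn2l => //; exact: C_ge1.
under eq_bigr do rewrite mulrA.
rewrite -mulr_suml.
have := @hoeff_step R n r K f i jtop wp K0 q lam (@init_freqs R n r i jtop) lam0 hq hS.
rewrite -/C -/(Phi q) => hh.
have Cp := C_gt0.
have hh' : \sum_(z : A) W q z * Phi (cga_step f K q z) <= C * Phi q := hh.
have hx : 0 <= (C ^+ T.+1)^-1 by rewrite invr_ge0 exprn_ge0 // ltW.
have := ler_wpM2r hx hh' => hh2.
apply: (le_trans hh2).
rewrite exprS -/q le_eqVlt; apply/orP; left; apply/eqP.
have c0 : C != 0 by exact: lt0r_neq0.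
field; rewrite ?expf_neq0 ?c0 //.
Qed.


Lemma V_ge0 T (s : {ffun 'I_T -> A}) : 0 <= V s.
Proof.
rewrite /V; case: ifP => _.
  by rewrite /Bd divr_ge0 ?expR_ge0 // exprn_ge0 // ltW // C_gt0.
by rewrite divr_ge0 ?expR_ge0 // exprn_ge0 // ltW // C_gt0.
Qed.

Lemma prob_bound :
  cga_Pr f K (fun s : {ffun 'I_T0 -> A} => hit s T0) * Bd <= 1.
Proof.
apply: le_trans (main_ind (leqnn T0)).
rewrite /cga_Pr mulr_suml big_mkcond /=; apply: ler_sum => s _.
case: ifP => h.
  by rewrite /V h.
by apply: mulr_ge0; [case: (run_facts s) | exact: V_ge0].
Qed.

End Main.

Theorem theorem4 (R : realType) (n r : nat) (K : R)
    (f : point n r -> R) (i : 'I_n) (jtop : 'I_r) (T : nat) :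
  (2 <= r)%N -> 0 < K ->
  (exists m : nat, K = m%:R * r%:R) ->
  val jtop = r.-1 ->
  weak_pref f i jtop ->
  cga_Pr f K
    (fun s : {ffun 'I_T -> point n r * point n r} =>
       [exists t : 'I_T.+1,
          cga_traj f K s t i jtop
            <= @init_freqs R n r i jtop - (2 * r%:R)^-1])
  <= 2 * expR (- (K ^+ 2 / (8 * T%:R * r%:R ^+ 2))).
Proof.
move=> r2 K0 hm _ wp.
set a : R := (2 * r%:R)^-1.
set lam : R := a * K ^+ 2 / T%:R.
have r0 : 0 < r%:R :> R by rewrite ltr0n (leq_trans _ r2).
have a0 : 0 < a by rewrite invr_gt0 mulr_gt0.
have lam0 : 0 <= lam.
  rewrite /lam; apply: mulr_ge0; last by rewrite invr_ge0 ler0n.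
  by apply: mulr_ge0; [exact: ltW | exact: sqr_ge0].
have := prob_bound wp K0 r2 hm T lam0.
set P := cga_Pr _ _ _.
rewrite /Bd /C -expRM_natl -expRB => hP.
have hP' : P <= expR (- (lam * a - T%:R * ((lam * K^-1) ^+ 2 / 2))).
  by rewrite expRN -div1r ler_pdivlMr ?expR_gt0.
apply: (le_trans hP').
have hE := expR_gt0 (- (K ^+ 2 / (8 * T%:R * r%:R ^+ 2))).
case: (posnP T) => [T0|Tpos].
  rewrite /lam T0 /= invr0 !mulr0 !mul0r subr0 oppr0 expR0.
  by rewrite invr0 mulr0 oppr0 expR0; lra.
have e : - (lam * a - T%:R * ((lam * K^-1) ^+ 2 / 2)) = - (K ^+ 2 / (8 * T%:R * r%:R ^+ 2)).
  have T0' : T%:R != 0 :> R by rewrite pnatr_eq0 -lt0n.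
  rewrite /lam /a; field.
  by rewrite T0' (lt0r_neq0 K0) (lt0r_neq0 r0).
rewrite e; lra.
Qed.
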